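(* Let $k$ be a field, $Q=(Q_0,Q_1)$ a quiver, and $\widehat{T}_{\Sigma}(V)$ the associated complete tensor algebra (complete path algebra). Let $G$ be a homogeneous group of continuous algebra automorphisms of $\widehat{T}_{\Sigma}(V)$ which is invariant on $\Sigma$. Let $\omega$ be any space of path of length $m\ge1$, and fix, for every subpath $\omega'$ of $\omega$, a space of irreducible invariants $V^G_{\omega',\mathrm{irr}}$. Then the canonical map $$\psi_{\omega}:\bigoplus_{p} V^G_{\omega,p,\mathrm{irr}}\longrightarrow V^G_{\omega},$$ where $p$ runs through all ordered partitions of $m$, is bijective.
   Context: $k$ is a discrete topological field. For $i,j\in Q_0$, $VQ_{i,j}$ is the $k$-vector space spanned by the arrows of $Q$ from $i$ to $j$. $\Sigma=\prod_{i\in Q_0}ke_i$, $V=\prod_{i,j\in Q_0}VQ_{i,j}$ (a pseudocompact $\Sigma$-bimodule), $V^{\widehat{\otimes}_0}=\Sigma$, $V^{\widehat{\otimes}_n}=V\widehat{\otimes}_{\Sigma}V^{\widehat{\otimes}_{n-1}}$ (completed tensor product over $\Sigma$), and $\widehat{T}_{\Sigma}(V)=\prod_{n\ge0}V^{\widehat{\otimes}_n}$ with the product topology and multiplication given by the completed tensor product. A continuous algebra automorphism $g$ is homogeneous if $g(V^{\widehat{\otimes}_n})=V^{\widehat{\otimes}_n}$ for all $n\in\mathbb{N}$; a group is homogeneous if all its elements are. $G$ is invariant on $\Sigma$ means every element of $G$ acts as the identity on $\Sigma$; then each $V^{\widehat{\otimes}_n}$ is a $kG$-module and $G$ preserves the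 subspaces below. For a $G$-stable subspace $W$, $W^G$ denotes the fixed points. An arrow space is a nonzero $V_a=VQ_{i,j}$. For a sequence of arrow spaces $V_{a_1},\dots,V_{a_m}$ with $V_{a_n}=VQ_{i_{n-1},i_n}$, $V_\omega=V_{a_m}\widehat{\otimes}_\Sigma\cdots\widehat{\otimes}_\Sigma V_{a_1}\subseteq V^{\widehat{\otimes}_m}$ is a space of path $\omega$ from $i_0$ to $i_m$ of length $m$; spaces of the form $V_{a_t}\widehat{\otimes}_\Sigma\cdots\widehat{\otimes}_\Sigma V_{a_s}$ are its subpaths. A 2-partition $\omega=\omega_2\omega_1$ is a pair of subpaths with $V_\omega=V_{\omega_2}\widehat{\otimes}_\Sigma V_{\omega_1}$; $\varphi_{\omega_1,\omega_2}:V^G_{\omega_2}\widehat{\otimes}_\Sigma V^G_{\omega_1}\to V^G_\omega$ is the canonical map, and $\varphi_\omega=\sum_{\omega_2\omega_1=\omega}\varphi_{\omega_1,\omega_2}$. The image of $\varphi_\omega$ is the space of composite invariants; a space of irreducible invariants $V^G_{\omega,\mathrm{irr}}$ is any fixed complement of $\mathrm{Im}\,\varphi_\omega$ in $V^G_\omega$. For an ordered partition $p=(m_l,\dots,m_1)$ of $m$ into positive integers, write $\omega=\omega_{m_l}\cdots\omega_{m_1}$ with $\omega_{m_t}$ the unique subpath of length $m_t$ in this position, and set $V^G_{\omega,p,\mathrm{irr}}=V^G_{\omega_{m_l},\mathrm{irr}}\widehat{\otimes}_\Sigma\cdots\widehat{\otimes}_\Sigma V^G_{\omega_{m_1},\mathrm{irr}}$.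 The map $\psi_\omega$ is the sum of the canonical (multiplication) maps $V^G_{\omega,p,\mathrm{irr}}\to V^G_\omega$. *)

(* Defs.v *)
From HB Require Import structures.
From mathcomp Require Import all_boot all_order all_algebra.
From mathcomp Require Import mxtens.
From Stdlib Require Import ClassicalEpsilon.

Set Implicit Arguments.
Unset Strict Implicit.
Unset Printing Implicit Defensive.

Import GRing.Theory.
Local Open Scope ring_scope.

(*  - A quiver Q = (Q0,Q1) is given by its vertex type Q0 and, for i j : Q0,  *)
(*    the number  na i j  of arrows i -> j.  VQ_{i,j} = F^(na i j), with the  *)
(*    arrows as standard basis (elements are row vectors 'rV_(na i j)).       *)
(*  - A path space omega is given by its vertex sequence i_0, i_1, ..., i_m,  *)
(*    written (i0, [:: i_1; ...; i_m]).                                       *)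
(*  - V_omega = V_{a_m} (x) ... (x) V_{a_1} is F^(Dim i0 l), the iterated     *)
(*    Kronecker product (mxtens.tensmx, row-major indices), with              *)
(*    V_{(i, j :: l)} = V_{(j, l)} (x) VQ_{i,j}.                             *)
(*  - A homogeneous continuous algebra automorphism g of the complete path    *)
(*    algebra that is the identity on Sigma is the same thing as a family of        *)
(*    invertible linear maps g i j of VQ_{i,j} (its degree-one part); it acts *)
(*    on V_omega by the tensor product of these maps (act g).                 *)

Section Defs.

Variable F : fieldType.
Variable Q0 : Type.
Variable na : Q0 -> Q0 -> nat.

Definition arrow_family := forall i j : Q0, 'M[F]_(na i j).

Definition is_group (G : arrow_family -> Prop) : Prop :=
  [/\ G (fun i j => 1%:M),
      (forall g h, G g -> G h -> G (fun i j => g i j *m h i j)),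
      (forall g, G g -> forall i j, g i j \in unitmx) &
      (forall g, G g -> G (fun i j => invmx (g i j)))].

Definition is_arrow_path (i0 : Q0) (l : seq Q0) : bool :=
  path (fun a b => 0 < na a b)%N i0 l.

Fixpoint Dim (i : Q0) (l : seq Q0) : nat :=
  match l with
  | [::] => 1%N
  | j :: l' => (Dim j l' * na i j)%N
  end.

(* action of g on V_omega : v |-> v *m act g i l *)
Fixpoint act (g : arrow_family) (i : Q0) (l : seq Q0) : 'M[F]_(Dim i l) :=
  match l return 'M[F]_(Dim i l) with
  | [::] => 1%:M
  | j :: l' => tensmx (act g j l') (g i j)
  end.

Definition castcols (r a b : nat) (A : 'M[F]_(r, a)) : 'M[F]_(r, b) :=
  match a =P b with
  | ReflectT e => castmx (erefl r, e) A
  | ReflectF _ => 0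
  end.

Definition subpath (i : Q0) (l : seq Q0) (i0 : Q0) (l0 : seq Q0) : Prop :=
  exists s : nat, (s + size l <= size l0)%N /\
    i :: l = take (size l).+1 (drop s (i0 :: l0)).

Section Group.

Variable G : arrow_family -> Prop.

(* V^G_omega, as a (square) matrix whose row space is the fixed subspace *)
Definition fixmx (i : Q0) (l : seq Q0) : 'M[F]_(Dim i l) :=
  epsilon (inhabits 0) (fun M : 'M[F]_(Dim i l) =>
    forall v : 'rV[F]_(Dim i l),
      (v <= M)%MS <-> (forall g, G g -> v *m act g i l = v)).

(* the 2-partition of omega = (i, l) after the first n1 arrows:
   omega_1 = (i, take n1 l), omega_2 = (nth i (i :: l) n1, drop n1 l) *)
Definition cut_vertex (i : Q0) (l : seq Q0) (n1 : nat) : Q0 := nth i (i :: l) n1.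

(* Im phi_omega : the space of composite invariants, i.e. the sum over the
   2-partitions omega = omega_2 omega_1 of the images of
   V^G_{omega_2} (x) V^G_{omega_1} in V_omega *)
Definition compmx (i : Q0) (l : seq Q0) : 'M[F]_(Dim i l) :=
  (\sum_(1 <= n1 < size l)
     <<castcols (Dim i l)
         (tensmx (fixmx (cut_vertex i l n1) (drop n1 l)) (fixmx i (take n1 l)))>>)%MS.

(* W i l is a space of irreducible invariants: a complement of Im phi in V^G *)
Definition irr_space (W : forall (i : Q0) (l : seq Q0), 'M[F]_(Dim i l))
  (i : Q0) (l : seq Q0) : Prop :=
  ((W i l + compmx i l)%MS == fixmx i l)%MS /\ mxdirect (W i l + compmx i l).

(* ordered partitions of n into positive integers, listed from the start
   of the path (first entry = length of the first factor omega_{m_1}) *)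
Fixpoint comps_aux (fuel n : nat) : seq (seq nat) :=
  if n is 0 then [:: [::]] else
  if fuel is f.+1 then
    flatten [seq [seq k :: c | c <- comps_aux f (n - k)] | k <- iota 1 n]
  else [::].

Definition comps (n : nat) : seq (seq nat) := comps_aux n n.

Section Psi.

Variable W : forall (i : Q0) (l : seq Q0), 'M[F]_(Dim i l).

(* dimension of V^G_{omega,p,irr} = (x)_t W_{omega_{m_t}} *)
Fixpoint rb (p : seq nat) (i : Q0) (l : seq Q0) : nat :=
  match p with
  | [::] => 1%N
  | n1 :: p' => (rb p' (cut_vertex i l n1) (drop n1 l) * \rank (W i (take n1 l)))%N
  end.

(* the images under the multiplication map of the tensor-product basis of
   V^G_{omega,p,irr} (tensors of the row bases of the W's), one per row *)
Fixpoint blocksmx (p : seq nat) (i : Q0) (l : seq Q0) : 'M[F]_(rb p i l, Dim i l) :=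
  match p return 'M[F]_(rb p i l, Dim i l) with
  | [::] => castcols (Dim i l) (1%:M : 'M[F]_1)
  | n1 :: p' =>
      castcols (Dim i l)
        (tensmx (blocksmx p' (cut_vertex i l n1) (drop n1 l))
                (row_base (W i (take n1 l))))
  end.

Fixpoint rs (ps : seq (seq nat)) (i : Q0) (l : seq Q0) : nat :=
  match ps with
  | [::] => 0%N
  | p :: ps' => (rb p i l + rs ps' i l)%N
  end.

(* the matrix of psi_omega on the basis of the direct sum over partitions *)
Fixpoint stackmx (ps : seq (seq nat)) (i : Q0) (l : seq Q0) : 'M[F]_(rs ps i l, Dim i l) :=
  match ps return 'M[F]_(rs ps i l, Dim i l) with
  | [::] => 0
  | p :: ps' => col_mx (blocksmx p i l) (stackmx ps' i l)
  end.

Definition psi_dom_dim (i : Q0) (l : seq Q0) : nat := rs (comps (size l)) i l.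

Definition psi (i : Q0) (l : seq Q0) (x : 'rV[F]_(psi_dom_dim i l)) : 'rV[F]_(Dim i l) :=
  x *m stackmx (comps (size l)) i l.

Definition psi_bijective (i : Q0) (l : seq Q0) : Prop :=
  (forall x, (@psi i l x <= fixmx i l)%MS) /\
  (forall y : 'rV[F]_(Dim i l), (y <= fixmx i l)%MS ->
     exists! x, @psi i l x = y).

End Psi.
End Group.
End Defs.

(* Main.v *)
Require Import Defs.
From HB Require Import structures.
From mathcomp Require Import all_boot all_order all_algebra.
From mathcomp Require Import mxtens.
From Stdlib Require Import ClassicalEpsilon Lia.
From mathcomp Require Import zify.

Set Implicit Arguments.
Unset Strict Implicit.
Unset Printing Implicit Defensive.
Import GRing.Theory.
Local Open Scope ring_scope.


Section Gen.
Variable F : fieldType.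

Lemma castcolsE r a b (e : a = b) (A : 'M[F]_(r, a)) :
  castcols b A = castmx (erefl r, e) A.
Proof.
rewrite /castcols; case: (a =P b) => [e'|ne]; last by case: ne.
by rewrite (eq_irrelevance e e').
Qed.

Lemma castcols_id r a (A : 'M[F]_(r, a)) : castcols a A = A.
Proof. by rewrite (castcolsE (erefl a)) castmx_id. Qed.

Lemma castcolsK r a b (e : a = b) (A : 'M[F]_(r, a)) :
  castcols a (castcols b A) = A.
Proof. by case: b / e; rewrite !castcols_id. Qed.

Lemma castcols_bad r a b (A : 'M[F]_(r, a)) : a <> b -> castcols b A = 0.
Proof. by rewrite /castcols; case: (a =P b). Qed.

Definition vecT m n (M : 'M[F]_(m, n)) : 'rV[F]_(m * n) :=
  \row_k M (mxtens_unindex k).1 (mxtens_unindex k).2.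
Definition unvecT m n (v : 'rV[F]_(m * n)) : 'M[F]_(m, n) :=
  \matrix_(i, j) v 0 (mxtens_index (i, j)).

Lemma vecTK m n : cancel (@vecT m n) (@unvecT m n).
Proof. by move=> M; apply/matrixP=> i j; rewrite !mxE mxtens_indexK. Qed.

Lemma unvecTK m n : cancel (@unvecT m n) (@vecT m n).
Proof.
move=> v; apply/matrixP=> i k; rewrite !mxE [i]ord1.
by rewrite -surjective_pairing mxtens_unindexK.
Qed.

Lemma vecT_inj m n : injective (@vecT m n).
Proof. exact: can_inj (@vecTK m n). Qed.

Lemma vecTD m n (A B : 'M[F]_(m, n)) : vecT (A + B) = vecT A + vecT B.
Proof. by apply/matrixP=> i k; rewrite !mxE. Qed.

Lemma vecTN m n (A : 'M[F]_(m, n)) : vecT (- A) = - vecT A.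
Proof. by apply/matrixP=> i k; rewrite !mxE. Qed.

Lemma vecT_mul m n p q (A : 'M[F]_(m, p)) (Z : 'M[F]_(m, n)) (B : 'M[F]_(n, q)) :
  vecT (A^T *m Z *m B) = vecT Z *m tensmx A B.
Proof.
apply/matrixP=> i0 k; rewrite [i0]ord1.
case: (mxtens_indexP k) => p0 q0.
rewrite [LHS]mxE mxtens_indexK /= [RHS]mxE (reindex (@mxtens_index m n)) /=; last first.
  by exists (@mxtens_unindex m n) => x _; rewrite (mxtens_indexK, mxtens_unindexK).
transitivity (\sum_i \sum_j vecT Z 0 (mxtens_index (i, j)) *
   tensmx A B (mxtens_index (i, j)) (mxtens_index (p0, q0))); last first.
  by rewrite pair_bigA; apply: eq_bigr => -[].
rewrite [RHS]exchange_big /=; rewrite mxE; apply: eq_bigr => j _; rewrite !mxE mulr_suml.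
apply: eq_bigr => i _; rewrite !mxE !mxtens_indexK /=.
by rewrite mulrCA mulrA.
Qed.

Lemma tens11 m n : tensmx (1%:M : 'M[F]_m) (1%:M : 'M[F]_n) = 1%:M.
Proof.
apply/matrixP=> i j.
case: (mxtens_indexP i) => i1 i2; case: (mxtens_indexP j) => j1 j2.
rewrite tensmxE !mxE.
have inj := can_inj (@mxtens_indexK m n).
case: (eqVneq i1 j1) => [->|n1]; case: (eqVneq i2 j2) => [->|n2];
  rewrite ?eqxx ?mulr1 ?mulr0 ?mul0r //.
- by rewrite (inj_eq inj) xpair_eqE eqxx (negbTE n2).
- by rewrite (inj_eq inj) xpair_eqE (negbTE n1).
- by rewrite (inj_eq inj) xpair_eqE (negbTE n1).
Qed.

Lemma tens_free m n p q (A : 'M[F]_(m, n)) (B : 'M[F]_(p, q)) :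
  row_free A -> row_free B -> row_free (tensmx A B).
Proof.
move=> /row_freeP[A' hA] /row_freeP[B' hB]; apply/row_freeP.
by exists (tensmx A' B'); rewrite tensmx_mul hA hB tens11.
Qed.

Lemma tens_full m n p q (A : 'M[F]_(m, n)) (B : 'M[F]_(p, q)) :
  row_full A -> row_full B -> row_full (tensmx A B).
Proof.
move=> /row_fullP[A' hA] /row_fullP[B' hB]; apply/row_fullP.
by exists (tensmx A' B'); rewrite tensmx_mul hA hB tens11.
Qed.

Lemma tens_mono m n p q m' p' (A : 'M[F]_(m, n)) (B : 'M[F]_(p, q))
   (A' : 'M[F]_(m', n)) (B' : 'M[F]_(p', q)) :
  (A <= A')%MS -> (B <= B')%MS -> (tensmx A B <= tensmx A' B')%MS.
Proof.
move=> /submxP[X ->] /submxP[Y ->].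
by rewrite -tensmx_mul submxMl.
Qed.

Lemma tens_subP m n p q k (A : 'M[F]_(m, n)) (B : 'M[F]_(p, q)) (S : 'M[F]_(k, n * q)) :
  reflect (forall Z, (vecT (A^T *m Z *m B) <= S)%MS) (tensmx A B <= S)%MS.
Proof.
apply: (iffP idP) => [h Z|h].
  by rewrite vecT_mul; apply: submx_trans h; apply: submxMl.
apply/row_subP => k0; rewrite rowE -[delta_mx _ _]unvecTK -vecT_mul; exact: h.
Qed.

Lemma sub_vecT_tens m n p q (A : 'M[F]_(m, n)) (B : 'M[F]_(p, q)) (M : 'M[F]_(n, q)) :
  (vecT M <= tensmx A B)%MS <-> exists Z, M = A^T *m Z *m B.
Proof.
split => [/submxP[y hy]|[Z ->]].
  exists (unvecT y); apply: vecT_inj; by rewrite vecT_mul unvecTK.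
by rewrite vecT_mul submxMl.
Qed.

Lemma sub_vecT_tens1 n p q (B : 'M[F]_(p, q)) (M : 'M[F]_(n, q)) :
  (vecT M <= tensmx (1%:M : 'M_n) B)%MS = (M <= B)%MS.
Proof.
apply/idP/idP => [/sub_vecT_tens[Z ->]|/submxP[Z ->]].
  by rewrite trmx1 mul1mx submxMl.
by apply/sub_vecT_tens; exists Z; rewrite trmx1 mul1mx.
Qed.

Lemma tens_addsr m n p1 p2 q (A : 'M[F]_(m, n)) (B : 'M[F]_(p1, q)) (C : 'M[F]_(p2, q)) :
  (tensmx A (B + C)%MS <= tensmx A B + tensmx A C)%MS.
Proof.
have h : ((B + C)%MS <= col_mx B C)%MS by rewrite -addsmxE.
apply: submx_trans (tens_mono (submx_refl A) h) _.
apply/tens_subP => Z.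
rewrite -[Z]hsubmxK -mulmxA mul_row_col mulmxDr !mulmxA vecTD.
by apply: addmx_sub_adds; rewrite vecT_mul submxMl.
Qed.

Lemma tens_addsl m1 m2 n p q (A1 : 'M[F]_(m1, n)) (A2 : 'M[F]_(m2, n)) (B : 'M[F]_(p, q)) :
  (tensmx (A1 + A2)%MS B <= tensmx A1 B + tensmx A2 B)%MS.
Proof.
have h : ((A1 + A2)%MS <= col_mx A1 A2)%MS by rewrite -addsmxE.
apply: submx_trans (tens_mono h (submx_refl B)) _.
apply/tens_subP => Z.
rewrite -[Z]vsubmxK tr_col_mx mul_row_col mulmxDl vecTD.
by apply: addmx_sub_adds; rewrite vecT_mul submxMl.
Qed.

Lemma tensA m1 n1 m2 n2 m3 n3 (A : 'M[F]_(m1, n1)) (B : 'M[F]_(m2, n2)) (C : 'M[F]_(m3, n3)) :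
  tensmx A (tensmx B C) = castmx (esym (mulnA _ _ _), esym (mulnA _ _ _)) (tensmx (tensmx A B) C).
Proof.
apply/matrixP=> i j.
case: (mxtens_indexP i) => i1 i23; case: (mxtens_indexP i23) => i2 i3.
case: (mxtens_indexP j) => j1 j23; case: (mxtens_indexP j23) => j2 j3.
rewrite castmxE !tensmxE.
set x := cast_ord _ _; set y := cast_ord _ _.
have -> : x = mxtens_index (mxtens_index (i1, i2), i3).
  by apply: val_inj => /=; rewrite mulnDl -mulnA addnA.
have -> : y = mxtens_index (mxtens_index (j1, j2), j3).
  by apply: val_inj => /=; rewrite mulnDl -mulnA addnA.
by rewrite !tensmxE mulrA.
Qed.

Lemma cc_mono r1 r2 a D (A : 'M[F]_(r1, a)) (B : 'M[F]_(r2, a)) :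
  (A <= B)%MS -> (castcols D A <= castcols D B)%MS.
Proof.
case: (a =P D) => [e|ne]; last by move=> _; rewrite !castcols_bad // sub0mx.
by case: D / e; rewrite !castcols_id.
Qed.

Lemma cc_sub r1 r2 a D (A : 'M[F]_(r1, a)) (B : 'M[F]_(r2, a)) :
  a = D -> (castcols D A <= castcols D B)%MS = (A <= B)%MS.
Proof. by move=> e; case: D / e; rewrite !castcols_id. Qed.

Lemma cc_rank r a D (A : 'M[F]_(r, a)) : a = D -> \rank (castcols D A) = \rank A.
Proof. by move=> e; case: D / e; rewrite !castcols_id. Qed.

Lemma cc_free r a D (A : 'M[F]_(r, a)) : a = D -> row_free (castcols D A) = row_free A.
Proof. by move=> e; case: D / e; rewrite !castcols_id. Qed.

Lemma cc_full r a D (A : 'M[F]_(r, a)) : a = D -> row_full (castcols D A) = row_full A.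
Proof. by move=> e; case: D / e; rewrite !castcols_id. Qed.

Lemma cc_adds r1 r2 a D (A : 'M[F]_(r1, a)) (B : 'M[F]_(r2, a)) :
  (castcols D (A + B)%MS <= castcols D A + castcols D B)%MS.
Proof.
case: (a =P D) => [e|ne]; last by rewrite !castcols_bad // sub0mx.
by case: D / e; rewrite !castcols_id.
Qed.

Lemma cc_add r a D (A B : 'M[F]_(r, a)) :
  castcols D (A + B) = castcols D A + castcols D B.
Proof.
case: (a =P D) => [e|ne]; last by rewrite !castcols_bad // addr0.
by case: D / e; rewrite !castcols_id.
Qed.

Lemma cc_opp r a D (A : 'M[F]_(r, a)) : castcols D (- A) = - castcols D A.
Proof.
case: (a =P D) => [e|ne]; last by rewrite !castcols_bad // oppr0.
by case: D / e; rewrite !castcols_id.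
Qed.

Lemma cc_mull r1 r a D (X : 'M[F]_(r1, r)) (A : 'M[F]_(r, a)) :
  castcols D (X *m A) = X *m castcols D A.
Proof.
case: (a =P D) => [e|ne]; last by rewrite !castcols_bad // mulmx0.
by case: D / e; rewrite !castcols_id.
Qed.

Lemma cc_inj r a D (A B : 'M[F]_(r, a)) : a = D -> castcols D A = castcols D B -> A = B.
Proof. by move=> e; case: D / e; rewrite !castcols_id. Qed.

Lemma castmx_rows_eqmx m m' n n' (e1 : m = m') (e2 : n = n') (A : 'M[F]_(m, n)) :
  (castmx (e1, e2) A == castmx (erefl m, e2) A)%MS.
Proof. by case: _ / e1; apply/eqmxP. Qed.

Lemma cc_assoc r1 r2 r3 a b c Dx Dy D (A : 'M[F]_(r1, a)) (B : 'M[F]_(r2, b))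
   (C : 'M[F]_(r3, c)) :
  (b * c = Dy)%N -> (a * b = Dx)%N -> (a * Dy = D)%N -> (Dx * c = D)%N ->
  (castcols D (tensmx A (castcols Dy (tensmx B C))) ==
   castcols D (tensmx (castcols Dx (tensmx A B)) C))%MS.
Proof.
move=> <- <- <- e; rewrite !castcols_id (castcolsE e) tensA.
have -> : e = esym (mulnA a b c) by apply: eq_irrelevance.
exact: castmx_rows_eqmx.
Qed.

End Gen.


Section Gen2.
Variable F : fieldType.

Lemma castmx_irr m m' n n' (e1 e1' : m = m') (e2 e2' : n = n') (A : 'M[F]_(m, n)) :
  castmx (e1, e2) A = castmx (e1', e2') A.
Proof. by rewrite (eq_irrelevance e1 e1') (eq_irrelevance e2 e2'). Qed.

Lemma castmx_self m n (e1 : m = m) (e2 : n = n) (A : 'M[F]_(m, n)) :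
  castmx (e1, e2) A = A.
Proof. by rewrite (castmx_irr e1 (erefl m) e2 (erefl n)) castmx_id. Qed.

Lemma tensmx_castl m m' n n' p q (e1 : m = m') (e2 : n = n') (A : 'M[F]_(m, n))
   (B : 'M[F]_(p, q)) :
  tensmx (castmx (e1, e2) A) B =
  castmx (congr1 (muln^~ p) e1, congr1 (muln^~ q) e2) (tensmx A B).
Proof. by case: m' / e1; case: n' / e2; rewrite !castmx_id. Qed.

Lemma castmx_mul_c r a b (e : a = b) (T : 'M[F]_(r, a)) (M : 'M[F]_a) :
  castmx (erefl r, e) T *m castmx (e, e) M = castmx (erefl r, e) (T *m M).
Proof. by case: b / e; rewrite !castmx_id. Qed.

Lemma fix_exists n (I : Type) (P : I -> Prop) (f : I -> 'M[F]_n) :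
  exists M : 'M[F]_n, forall v : 'rV_n,
    (v <= M)%MS <-> (forall g, P g -> v *m f g = v).
Proof.
have fixS (M : 'M[F]_n) : (forall g, P g -> M *m f g = M) ->
    forall v : 'rV_n, (v <= M)%MS -> forall g, P g -> v *m f g = v.
  by move=> hM v /submxP[x ->] g hg; rewrite -mulmxA hM.
suff key : forall d (M : 'M[F]_n), (forall g, P g -> M *m f g = M) ->
    (n - \rank M <= d)%N -> exists M' : 'M[F]_n, forall v : 'rV_n,
    (v <= M')%MS <-> (forall g, P g -> v *m f g = v).
  apply: (key n 0); first by move=> g _; rewrite mul0mx.
  by rewrite leq_subr.
elim=> [|d IH] M hM hd.
  exists M => v; split; first exact: fixS.
  move=> _; apply: submx_full.
  by rewrite /row_full eqn_leq rank_leq_col /= -subn_eq0 -leqn0.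
have [all|] := classic (forall v : 'rV_n, (forall g, P g -> v *m f g = v) -> (v <= M)%MS).
  by exists M => v; split; [exact: fixS | exact: all].
move=> /not_all_ex_not[v hvn].
have hv : forall g, P g -> v *m f g = v.
  by apply: NNPP => h; apply: hvn => /h.
have nv : ~ (v <= M)%MS by move=> h; apply: hvn.
have hM2 : forall g, P g -> (M + v)%MS *m f g = (M + v)%MS.
  have /submxP[X hX] : ((M + v)%MS <= col_mx M v)%MS by rewrite -addsmxE.
  by move=> g hg; rewrite hX -mulmxA mul_col_mx hM // hv.
apply: (IH _ hM2).
have lt : (M < M + v)%MS.
  rewrite ltmxE addsmxSl /=; apply/negP => h; apply: nv.
  exact: submx_trans (addsmxSr M v) h.
move: (rank_ltmx lt) hd => h1 h2.
have := rank_leq_col (M + v)%MS; lia.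
Qed.

End Gen2.

Section Paths.
Variable F : fieldType.
Variable Q0 : Type.
Variable na : Q0 -> Q0 -> nat.
Local Notation Dim := (Dim na).

Lemma Dim_cat i p m : Dim i (p ++ m) = (Dim (last i p) m * Dim i p)%N.
Proof. by elim: p i => [|j p IH] i /=; rewrite ?muln1 // IH mulnA. Qed.

Lemma act_cat (g : arrow_family F na) i p m :
  act g i (p ++ m) = castmx (esym (Dim_cat i p m), esym (Dim_cat i p m))
    (tensmx (act g (last i p) m) (act g i p)).
Proof.
elim: p i => [|j p IH] i /=.
  by rewrite tens_mx_scalar scale1r castmx_comp castmx_self.
rewrite IH tensmx_castl.
have h := tensA (act g (last j p) m) (act g j p) (g i j).
have h2 : tensmx (tensmx (act g (last j p) m) (act g j p)) (g i j) =
   castmx (mulnA _ _ _, mulnA _ _ _) (tensmx (act g (last j p) m) (tensmx (act g j p) (g i j))).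
  by rewrite h castmx_comp castmx_self.
by rewrite h2 castmx_comp; apply: castmx_irr.
Qed.

Lemma act_cc (g : arrow_family F na) i l x m p r (T : 'M[F]_(r, (Dim x m * Dim i p)%N)) :
  l = p ++ m -> x = last i p ->
  castcols (Dim i l) T *m act g i l =
  castcols (Dim i l) (T *m tensmx (act g x m) (act g i p)).
Proof.
move=> -> ex; subst x; rewrite act_cat !(castcolsE (esym (Dim_cat i p m))).
exact: castmx_mul_c.
Qed.

End Paths.


Section Sums.
Variable F : fieldType.

Lemma cc0 r a D : castcols D (0 : 'M[F]_(r, a)) = 0.
Proof.
case: (a =P D) => [e|ne]; last by rewrite castcols_bad.
by case: D / e; rewrite castcols_id.
Qed.

Lemma sums_sub n m (s : seq nat) (A : nat -> 'M[F]_n) (B : 'M[F]_(m, n)) :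
  (forall k, k \in s -> (A k <= B)%MS) -> ((\sum_(k <- s) A k)%MS <= B)%MS.
Proof.
elim: s => [|x s IH] h; first by rewrite big_nil sub0mx.
rewrite big_cons addsmx_sub h ?mem_head //=; apply: IH => k ks.
by apply: h; rewrite in_cons ks orbT.
Qed.

Lemma sub_sums n (s : seq nat) (A : nat -> 'M[F]_n) k :
  k \in s -> (A k <= \sum_(j <- s) A j)%MS.
Proof.
elim: s => [//|x s IH]; rewrite in_cons big_cons => /orP[/eqP ->|ks].
  exact: addsmxSl.
exact: submx_trans (IH ks) (addsmxSr _ _).
Qed.

Lemma sums_mulr n p (s : seq nat) (A : nat -> 'M[F]_n) (M : 'M[F]_(n, p)) :
  ((\sum_(k <- s) A k)%MS *m M <= \sum_(k <- s) <<A k *m M>>)%MS.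
Proof.
elim: s => [|x s IH]; first by rewrite !big_nil mul0mx sub0mx.
rewrite !big_cons addsmxMr; apply: addsmxS => //; by rewrite genmxE.
Qed.

Lemma tens_sums r a b D (s : seq nat) (X : 'M[F]_(r, a)) (A : nat -> 'M[F]_b) :
  (castcols D (tensmx X (\sum_(k <- s) A k)%MS) <=
     \sum_(k <- s) <<castcols D (tensmx X (A k))>>)%MS.
Proof.
elim: s => [|x s IH]; first by rewrite !big_nil tensmx0 cc0 sub0mx.
rewrite !big_cons; apply: submx_trans (cc_mono _ (tens_addsr _ _ _)) _.
apply: submx_trans (cc_adds _ _ _) _; apply: addsmxS; first by rewrite genmxE.
by [].
Qed.

End Sums.

Section Lists.
Variable T : Type.

Lemma cut_last (i : T) l k : (k <= size l)%N -> cut_vertex i l k = last i (take k l).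
Proof.
rewrite /cut_vertex.
elim: l i k => [|j l IH] i [|k] //= hk.
rewrite -IH //; apply: set_nth_default; by rewrite /= ltnS.
Qed.

Lemma cut_take (i : T) l j k : (j <= k)%N -> (k <= size l)%N ->
  cut_vertex i (take k l) j = cut_vertex i l j.
Proof.
move=> hjk hk; rewrite cut_last; last by rewrite size_takel.
rewrite cut_last; last by lia.
by rewrite take_takel.
Qed.

Lemma drop_take_cat (l : seq T) j k : (j <= k)%N -> (k <= size l)%N ->
  drop j (take k l) ++ drop k l = drop j l.
Proof.
move=> hjk hk; rewrite -{3}(cat_take_drop k l) drop_cat size_takel //.
case: ltnP => // h; have e : j = k by lia.
subst j; rewrite subnn drop0; have -> // : drop k (take k l) = [::].
by apply: drop_oversize; rewrite size_takel.
Qed.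

Lemma last_cut (i : T) l j k : (j <= k)%N -> (k <= size l)%N ->
  last (cut_vertex i l j) (drop j (take k l)) = cut_vertex i l k.
Proof.
move=> hjk hk; rewrite !cut_last //; last by lia.
rewrite -last_cat -{1}(take_takel l hjk) cat_take_drop //.
Qed.

End Lists.

Section Subpath.
Variable Q0 : Type.

Lemma subpath_Y (i : Q0) l i0 l0 k : subpath i l i0 l0 -> (k <= size l)%N ->
  subpath i (take k l) i0 l0.
Proof.
move=> [s [hs e]] hk; exists s; rewrite size_takel //; split; first by lia.
rewrite -/(take k.+1 (i :: l)) e take_takel //.
Qed.

Lemma subpath_X (i : Q0) l i0 l0 k : subpath i l i0 l0 -> (k <= size l)%N ->
  subpath (cut_vertex i l k) (drop k l) i0 l0.
Proof.
move=> [s [hs e]] hk; exists (s + k)%N; rewrite size_drop; split; first by lia.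
have -> : cut_vertex i l k :: drop k l = drop k (i :: l).
  by rewrite [drop k (i :: l)](drop_nth i).
rewrite e addnC -drop_drop [RHS]take_drop.
have -> : ((size l - k).+1 + k = (size l).+1)%N by lia.
by [].
Qed.

End Subpath.


Section Gen4.
Variable F : fieldType.

Lemma submxN m1 m2 n (A : 'M[F]_(m1, n)) (B : 'M[F]_(m2, n)) :
  (A <= B)%MS -> (- A <= B)%MS.
Proof. by move=> h; rewrite -scaleN1r scalemx_sub. Qed.

Lemma submxD_sub m1 m2 n (A C : 'M[F]_(m1, n)) (B : 'M[F]_(m2, n)) :
  (A <= B)%MS -> (C <= B)%MS -> (A - C <= B)%MS.
Proof. by move=> hA hC; apply: addmx_sub => //; apply: submxN. Qed.

Lemma cc_tens1 r b D (B : 'M[F]_(r, b)) : b = D ->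
  (castcols D (tensmx (1%:M : 'M[F]_1) B) == castcols D B)%MS.
Proof.
move=> e; case: D / e; rewrite castcols_id tens_scalar1mx.
rewrite (castcolsE (mul1n b)) castmx_comp /=.
rewrite (castmx_irr _ (esym (mul1n r)) _ (erefl b)).
by apply/eqmxP; exact: eqmx_cast.
Qed.

Lemma row_full1 n : row_full (1%:M : 'M[F]_n).
Proof. by rewrite row_full_unit unitmx1. Qed.

Lemma zmod_help (V : zmodType) (a c m1 m2 : V) : c + a = m2 + m1 -> a - m1 = m2 - c.
Proof.
move=> h; have -> : a = m2 + m1 - c by rewrite -h addrC addKr.
by rewrite addrAC addrK.
Qed.

Lemma cap0P n m1 m2 (A : 'M[F]_(m1, n)) (B : 'M[F]_(m2, n)) :
  (forall v : 'rV_n, (v <= A)%MS -> (v <= B)%MS -> v = 0) -> (A :&: B)%MS = 0.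
Proof.
move=> h; apply/eqP; rewrite -submx0; apply/row_subP => k.
rewrite (h (row k (A :&: B)%MS)) ?sub0mx //.
  exact: submx_trans (row_sub _ _) (capmxSl _ _).
exact: submx_trans (row_sub _ _) (capmxSr _ _).
Qed.

Lemma vecT_both m n (A : 'M[F]_m) (B : 'M[F]_n) (M : 'M[F]_(m, n)) :
  (M^T <= A)%MS -> (M <= B)%MS -> (vecT M <= tensmx A B)%MS.
Proof.
move=> hA hB; apply/sub_vecT_tens.
exists ((pinvmx A)^T *m M *m pinvmx B).
have e1 : M = A^T *m (pinvmx A)^T *m M.
  by rewrite -trmx_mul -[in LHS](trmxK M) -{1}(mulmxKpV hA) !trmx_mul trmxK mulmxA.
rewrite -{1}(mulmxKpV hB) {1}e1 !mulmxA.
by [].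
Qed.

Lemma full_eq r1 r2 r3 a b D (A : 'M[F]_(r1, a)) (A' : 'M[F]_(r2, a)) (B : 'M[F]_(r3, b)) :
  row_full A -> row_full A' ->
  (castcols D (tensmx A B) == castcols D (tensmx A' B))%MS.
Proof.
move=> hA hA'; apply/andP; split; apply: cc_mono; apply: tens_mono => //;
  exact: submx_full.
Qed.

End Gen4.

Section Main.
Variable F : fieldType.
Variable Q0 : Type.
Variable na : Q0 -> Q0 -> nat.
Variable G : arrow_family F na -> Prop.
Variable W : forall (i : Q0) (l : seq Q0), 'M[F]_(Dim na i l).
Variables (i0 : Q0) (l0 : seq Q0).
Hypothesis HW : forall i l, subpath i l i0 l0 -> (0 < size l)%N -> irr_space G W i l.

Local Notation Dim := (Dim na).
Local Notation cv := cut_vertex.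
Local Notation R := (fixmx G).
Local Notation sub i l := (subpath i l i0 l0).

Lemma fixmxP i l (v : 'rV[F]_(Dim i l)) :
  (v <= R i l)%MS <-> (forall g, G g -> v *m act g i l = v).
Proof.
have [M hM] := fix_exists G (fun g => act g i l).
move: v; rewrite /fixmx.
exact: (epsilon_spec (inhabits (0 : 'M[F]_(Dim i l)))
  (fun M : 'M[F]_(Dim i l) => forall v : 'rV[F]_(Dim i l),
      (v <= M)%MS <-> (forall g, G g -> v *m act g i l = v)) (ex_intro _ M hM)).
Qed.

Lemma fixmx_mul i l r (M : 'M[F]_(r, Dim i l)) g :
  (M <= R i l)%MS -> G g -> M *m act g i l = M.
Proof.
move=> hM hg; apply/row_matrixP => k; rewrite row_mul.
exact: (proj1 (fixmxP (row k M)) (submx_trans (row_sub k M) hM) g hg).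
Qed.

Lemma fixmx_sub i l r (M : 'M[F]_(r, Dim i l)) :
  (forall g, G g -> M *m act g i l = M) -> (M <= R i l)%MS.
Proof.
move=> h; apply/row_subP => k; apply/fixmxP => g hg; by rewrite -row_mul h.
Qed.

Lemma fixmx_nil i : row_full (R i [::]).
Proof. by rewrite -sub1mx; apply: fixmx_sub => g _ /=; rewrite mulmx1. Qed.

Lemma fixmx_tens i l x m p r1 r2 (A : 'M[F]_(r1, Dim x m)) (B : 'M[F]_(r2, Dim i p)) :
  l = p ++ m -> x = last i p -> (A <= R x m)%MS -> (B <= R i p)%MS ->
  (castcols (Dim i l) (tensmx A B) <= R i l)%MS.
Proof.
move=> el ex hA hB; apply: fixmx_sub => g hg.
by rewrite (act_cc _ _ el ex) tensmx_mul !fixmx_mul.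
Qed.

Lemma dim_k i l k : (k <= size l)%N ->
  (Dim (cv i l k) (drop k l) * Dim i (take k l))%N = Dim i l.
Proof. by move=> hk; rewrite cut_last // -Dim_cat cat_take_drop. Qed.

Lemma act_k g i l k r (T : 'M[F]_(r, Dim (cv i l k) (drop k l) * Dim i (take k l))) :
  (k <= size l)%N ->
  castcols (Dim i l) T *m act g i l =
  castcols (Dim i l) (T *m tensmx (act g (cv i l k) (drop k l)) (act g i (take k l))).
Proof. by move=> hk; apply: act_cc; [rewrite cat_take_drop | exact: cut_last]. Qed.

Lemma fix_k i l k r1 r2 (A : 'M[F]_(r1, Dim (cv i l k) (drop k l)))
   (B : 'M[F]_(r2, Dim i (take k l))) : (k <= size l)%N ->
  (A <= R (cv i l k) (drop k l))%MS -> (B <= R i (take k l))%MS ->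
  (castcols (Dim i l) (tensmx A B) <= R i l)%MS.
Proof.
by move=> hk; apply: fixmx_tens; [rewrite cat_take_drop | exact: cut_last].
Qed.

Lemma W_R i l : sub i l -> (0 < size l)%N -> (W i l <= R i l)%MS.
Proof.
move=> hs hl; case: (HW hs hl) => /andP[h _] _.
exact: submx_trans (addsmxSl _ _) h.
Qed.

Lemma dim_mid i l j k : (j <= k)%N -> (k <= size l)%N ->
  (Dim (cv i l k) (drop k l) * Dim (cv i (take k l) j) (drop j (take k l)))%N =
  Dim (cv i l j) (drop j l).
Proof.
move=> hjk hk; rewrite cut_take // -(drop_take_cat hjk hk) Dim_cat last_cut //.
Qed.

Lemma assoc_ij i l j k r1 r2 r3 (A : 'M[F]_(r1, Dim (cv i l k) (drop k l)))
   (B : 'M[F]_(r2, Dim (cv i (take k l) j) (drop j (take k l))))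
   (C : 'M[F]_(r3, Dim i (take j (take k l)))) :
  (j <= k)%N -> (k <= size l)%N ->
  (castcols (Dim i l) (tensmx A (castcols (Dim i (take k l)) (tensmx B C))) ==
   castcols (Dim i l) (tensmx (castcols (Dim (cv i l j) (drop j l)) (tensmx A B)) C))%MS.
Proof.
move=> hjk hk; apply: cc_assoc.
- by apply: dim_k; rewrite size_takel.
- exact: dim_mid.
- exact: dim_k.
- by rewrite take_takel // dim_k //; lia.
Qed.

Definition Uk i l k := castcols (Dim i l) (tensmx (R (cv i l k) (drop k l)) (W i (take k l))).
Definition Vk i l k := castcols (Dim i l)
  (tensmx (1%:M : 'M[F]_(Dim (cv i l k) (drop k l))) (W i (take k l))).
Definition TW i l N := (\sum_(1 <= k < N) <<Vk i l k>>)%MS.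
Definition RW i l N := (\sum_(1 <= k < N) <<Uk i l k>>)%MS.

Lemma Uk_Vk i l k : (Uk i l k <= Vk i l k)%MS.
Proof. by apply: cc_mono; apply: tens_mono => //; apply: submx1. Qed.

Lemma Uk_R i l k : sub i l -> (0 < k)%N -> (k <= size l)%N -> (Uk i l k <= R i l)%MS.
Proof.
move=> hs hk0 hk; apply: fix_k => //; apply: W_R; first exact: subpath_Y.
by rewrite size_takel.
Qed.

Lemma RW_TW i l N : (RW i l N <= TW i l N)%MS.
Proof.
apply: sums_sub => k hk; rewrite genmxE.
apply: submx_trans (Uk_Vk i l k) _.
have h : (Vk i l k <= <<Vk i l k>>)%MS by rewrite genmxE.
exact: submx_trans h (sub_sums _ hk).
Qed.

Lemma RW_comp i l N : sub i l -> (N <= size l)%N -> (RW i l N <= compmx G i l)%MS.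
Proof.
move=> hs hN; apply: sums_sub => k; rewrite mem_index_iota => /andP[hk1 hk2].
rewrite genmxE.
have hk : (k \in index_iota 1 (size l)) by rewrite mem_index_iota hk1; lia.
apply: submx_trans _ (sub_sums _ hk); rewrite genmxE.
apply: cc_mono; apply: tens_mono => //; apply: W_R; first by apply: subpath_Y => //; lia.
by rewrite size_takel //; lia.
Qed.

Lemma RW_mono i l N1 N2 : (N1 <= N2)%N -> (RW i l N1 <= RW i l N2)%MS.
Proof.
move=> h; apply: sums_sub => k; rewrite mem_index_iota => /andP[h1 h2].
by apply: sub_sums; rewrite mem_index_iota h1; lia.
Qed.

Lemma TW_act i l N g : sub i l -> (N <= (size l).+1)%N -> G g ->
  (TW i l N *m act g i l <= TW i l N)%MS.
Proof.
move=> hs hN hg; apply: submx_trans (sums_mulr _ _ _) _.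
apply: sums_sub => k hk; move: (hk); rewrite mem_index_iota => /andP[hk1 hk2].
rewrite !genmxE; apply: submx_trans _ (sub_sums _ hk); rewrite genmxE.
rewrite (eqmxMr _ (genmxE _)) /Vk act_k; last by lia.
rewrite tensmx_mul mul1mx fixmx_mul //; last first.
  by apply: W_R; [apply: subpath_Y => //; lia | rewrite size_takel //; lia].
apply: cc_mono; apply: tens_mono => //; exact: submx1.
Qed.

Lemma assoc_k i l k b : (k <= b)%N -> (b <= size l)%N ->
  (castcols (Dim i l) (tensmx (1%:M : 'M[F]_(Dim (cv i l b) (drop b l)))
      (Vk i (take b l) k)) == Vk i l k)%MS.
Proof.
move=> hkb hb; apply/eqmxP.
apply: eqmx_trans (eqmxP (assoc_ij _ _ _ hkb hb)) _.
rewrite /Vk take_takel //; apply/eqmxP; apply: full_eq; last by rewrite row_full_unit unitmx1.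
rewrite cc_full; last exact: dim_mid.
by apply: tens_full; rewrite row_full_unit unitmx1.
Qed.

Lemma TW_assoc i l b : (b <= size l)%N ->
  (TW i l b == castcols (Dim i l) (tensmx (1%:M : 'M[F]_(Dim (cv i l b) (drop b l)))
      (TW i (take b l) b)))%MS.
Proof.
move=> hb; apply/andP; split.
  apply: sums_sub => k hk; move: (hk); rewrite mem_index_iota => /andP[hk1 hk2].
  rewrite genmxE -(eqmxP (assoc_k i (ltnW hk2) hb)).
  apply: cc_mono; apply: tens_mono => //.
  have h : (Vk i (take b l) k <= <<Vk i (take b l) k>>)%MS by rewrite genmxE.
  exact: submx_trans h (sub_sums _ hk).
apply: submx_trans (tens_sums _ _ _ _) _.
apply: sums_sub => k hk; move: (hk); rewrite mem_index_iota => /andP[hk1 hk2].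
rewrite genmxE.
have h1 : (<<Vk i (take b l) k>> <= Vk i (take b l) k)%MS by rewrite genmxE.
apply: submx_trans (cc_mono _ (tens_mono (submx_refl _) h1)) _.
rewrite (eqmxP (assoc_k i (ltnW hk2) hb)).
have h : (Vk i l k <= <<Vk i l k>>)%MS by rewrite genmxE.
exact: submx_trans h (sub_sums _ hk).
Qed.

Definition Qprop i l := forall v : 'rV[F]_(Dim i l),
  (v <= R i l)%MS -> (v <= TW i l (size l))%MS -> (v <= RW i l (size l))%MS.

Lemma W_cap_S i l : sub i l -> (0 < size l)%N -> Qprop i l ->
  (W i l :&: TW i l (size l))%MS = 0.
Proof.
move=> hs hl hQ; case: (HW hs hl) => _ hd0.
have hd : (W i l :&: compmx G i l)%MS = 0.
  by move: hd0; rewrite mxdirect_addsE => /and3P[_ _ /eqP].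
apply: cap0P => v hvW hvT.
have hvC : (v <= compmx G i l)%MS.
  apply: submx_trans (RW_comp hs (leqnn _)); apply: hQ => //.
  exact: submx_trans hvW (W_R hs hl).
have h : (v <= W i l :&: compmx G i l)%MS by rewrite sub_capmx hvW hvC.
by move: h; rewrite hd submx0 => /eqP.
Qed.

Lemma Q_step i l : sub i l ->
  (forall b, (0 < b)%N -> (b < size l)%N -> Qprop i (take b l)) -> Qprop i l.
Proof.
move=> hs hQ.
suff key : forall N, (N <= size l)%N -> forall v : 'rV[F]_(Dim i l),
    (v <= R i l)%MS -> (v <= TW i l N)%MS -> (v <= RW i l N)%MS.
  by move=> v; exact: key.
elim=> [|b IH] hN v hR hT.
  by move: hT; rewrite /TW /RW !big_geq.
case: (posnP b) => [b0|bpos].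
  by subst b; move: hT; rewrite /TW /RW !big_geq.
have hb : (b < size l)%N by lia.
move: hT; rewrite /TW /RW !big_nat_recr //= -/(TW i l b) -/(RW i l b) => hT.
have hsY := subpath_Y hs (ltnW hb).
have hsz : size (take b l) = b by rewrite size_takel // ltnW.
have e := dim_k i (ltnW hb).
pose M := unvecT (castcols (Dim (cv i l b) (drop b l) * Dim i (take b l)) v).
have hv : v = castcols (Dim i l) (vecT M) by rewrite /M unvecTK castcolsK.
set S := TW i (take b l) b.
have hMSW : (M <= S + W i (take b l))%MS.
  rewrite -sub_vecT_tens1 -(cc_sub _ _ e) -hv; apply: submx_trans hT _.
  rewrite addsmx_sub; apply/andP; split.
    apply: submx_trans (proj1 (andP (TW_assoc i (ltnW hb)))) _.
    by apply: cc_mono; apply: tens_mono => //; apply: addsmxSl.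
  by rewrite genmxE; apply: cc_mono; apply: tens_mono => //; apply: addsmxSr.
case/sub_addsmxP: hMSW => -[u1 u2] /= hM.
set M2 := u1 *m S; set M1 := u2 *m W i (take b l).
have hWR : (W i (take b l) <= R i (take b l))%MS by apply: W_R; rewrite // hsz.
have hcap : (W i (take b l) :&: S)%MS = 0.
  by have := W_cap_S hsY; rewrite hsz; apply => //; apply: hQ.
have hM1fix : forall g, G g -> M1^T *m act g (cv i l b) (drop b l) = M1^T.
  move=> g hg.
  have fixM : (act g (cv i l b) (drop b l))^T *m M *m act g i (take b l) = M.
    have := proj1 (fixmxP v) hR g hg.
    rewrite {1}hv act_k ?(ltnW hb) // -vecT_mul {1}hv.
    by move/(cc_inj e)/vecT_inj.
  have hM1 : M1 *m act g i (take b l) = M1.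
    by apply: fixmx_mul => //; apply: submx_trans (submxMl _ _) hWR.
  set aX := (act g (cv i l b) (drop b l))^T.
  have eq : aX *m M1 - M1 = M2 - aX *m M2 *m act g i (take b l).
    move: fixM; rewrite hM mulmxDr mulmxDl -(mulmxA aX M1) hM1 => h.
    exact: zmod_help h.
  have h0 : aX *m M1 - M1 = 0.
    have hx : (aX *m M1 - M1 <= W i (take b l) :&: S)%MS.
      rewrite sub_capmx; apply/andP; split.
        by apply: submxD_sub; rewrite /M1 ?mulmxA submxMl.
      rewrite eq; apply: submxD_sub; first exact: submxMl.
      rewrite -mulmxA /M2 -mulmxA; apply: submx_trans (submxMl _ _) _.
      by apply: submx_trans (submxMl _ _) _; apply: TW_act => //; rewrite hsz.
    by move: hx; rewrite hcap submx0 => /eqP.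
  have h1 : aX *m M1 = M1 by apply/eqP; rewrite -subr_eq0 h0.
  by rewrite -{1}(trmxK (act g _ _)) -trmx_mul -/aX h1.
have hM1R : (M1^T <= R (cv i l b) (drop b l))%MS by apply: fixmx_sub.
have hx1 : (castcols (Dim i l) (vecT M1) <= <<Uk i l b>>)%MS.
  rewrite genmxE /Uk; apply: cc_mono; apply: vecT_both => //; exact: submxMl.
set x1 := castcols (Dim i l) (vecT M1); set v2 := castcols (Dim i l) (vecT M2).
have hv2 : v = x1 + v2 by rewrite hv hM vecTD cc_add addrC.
have hv2R : (v2 <= R i l)%MS.
  have -> : v2 = v - x1 by rewrite hv2 addrC addKr.
  apply: submxD_sub hR _; apply: submx_trans hx1 _; rewrite genmxE.
  by apply: Uk_R => //; lia.
have hv2T : (v2 <= TW i l b)%MS.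
  apply: submx_trans _ (proj2 (andP (TW_assoc i (ltnW hb)))).
  by apply: cc_mono; rewrite sub_vecT_tens1; exact: submxMl.
have hIH := IH (ltnW hb) v2 hv2R hv2T.
by rewrite hv2 addrC; apply: addmx_sub_adds.
Qed.

Lemma Un_W i l : (<<Uk i l (size l)>> == W i l)%MS.
Proof.
rewrite /Uk drop_size take_size; apply/eqmxP.
apply: eqmx_trans (genmxE _) _.
have h1 := @full_eq _ _ _ _ _ _ (Dim i l) _ _ (W i l) (fixmx_nil (cv i l (size l))) (@row_full1 F 1).
have h2 := cc_tens1 (W i l) (erefl (Dim i l)); rewrite castcols_id in h2.
exact: eqmx_trans (eqmxP h1) (eqmxP h2).
Qed.

Lemma disj i l b : sub i l -> (0 < b)%N -> (b <= size l)%N ->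
  ((b < size l)%N -> Qprop i (take b l)) ->
  (<<Uk i l b>> :&: RW i l b)%MS = 0.
Proof.
move=> hs hb0 hb hQ.
have hl : (0 < size l)%N by lia.
case: (ltnP b (size l)) => hbl; last first.
  have eb : b = size l by lia.
  subst b; case: (HW hs hl) => _ hd0.
  have hd : (W i l :&: compmx G i l)%MS = 0.
    by move: hd0; rewrite mxdirect_addsE => /and3P[_ _ /eqP].
  apply: cap0P => v h1 h2.
  have h : (v <= W i l :&: compmx G i l)%MS.
    rewrite sub_capmx (submx_trans h2 (RW_comp hs (leqnn _))) andbT.
    by rewrite -(eqmxP (Un_W i l)).
  by move: h; rewrite hd submx0 => /eqP.
have hsY := subpath_Y hs (ltnW hbl).
have hsz : size (take b l) = b by rewrite size_takel // ltnW.
have hcap : (W i (take b l) :&: TW i (take b l) b)%MS = 0.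
  by have := W_cap_S hsY; rewrite hsz; apply => //; apply: hQ.
have e := dim_k i (ltnW hbl).
apply: cap0P => v h1 h2.
pose M := unvecT (castcols (Dim (cv i l b) (drop b l) * Dim i (take b l)) v).
have hv : v = castcols (Dim i l) (vecT M) by rewrite /M unvecTK castcolsK.
have hMW : (M <= W i (take b l))%MS.
  rewrite -sub_vecT_tens1 -(cc_sub _ _ e) -hv.
  apply: submx_trans h1 _; rewrite genmxE; apply: submx_trans (Uk_Vk _ _ _) _.
  by [].
have hMS : (M <= TW i (take b l) b)%MS.
  rewrite -sub_vecT_tens1 -(cc_sub _ _ e) -hv.
  apply: submx_trans h2 _; apply: submx_trans (RW_TW _ _ _) _.
  exact: (proj1 (andP (TW_assoc i (ltnW hbl)))).
have : (M <= W i (take b l) :&: TW i (take b l) b)%MS by rewrite sub_capmx hMW hMS.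
rewrite hcap submx0 => /eqP M0.
rewrite hv M0 (_ : vecT 0 = 0) ?cc0 //.
by apply/matrixP => x y; rewrite !mxE.
Qed.

Lemma rank_RW i l : sub i l ->
  (forall b, (0 < b)%N -> (b < size l)%N -> Qprop i (take b l)) ->
  forall N, (N <= (size l).+1)%N ->
  \rank (RW i l N) = (\sum_(1 <= k < N) \rank (Uk i l k))%N.
Proof.
move=> hs hQ; elim=> [|b IH] hN; first by rewrite /RW !big_geq // mxrank0.
case: (posnP b) => [->|bpos]; first by rewrite /RW !big_geq // mxrank0.
rewrite /RW !big_nat_recr //= -/(RW i l b) mxrank_disjoint_sum.
  by rewrite IH ?mxrank_gen //; lia.
rewrite capmxC; apply: disj => //.
by move=> hb; apply: hQ.
Qed.

Lemma span_comp i l : sub i l -> (compmx G i l <= RW i l (size l))%MS.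
Proof.
move=> hs.
have key : forall k, (0 < k)%N -> (k < size l)%N ->
  (castcols (Dim i l) (tensmx (R (cv i l k) (drop k l)) (R i (take k l)))
     <= RW i l k.+1)%MS.
  elim/ltn_ind => k IH hk0 hk.
  have hsY := subpath_Y hs (ltnW hk).
  have hsz : size (take k l) = k by rewrite size_takel // ltnW.
  have hRY : (R i (take k l) <= W i (take k l) + compmx G i (take k l))%MS.
    have [|/andP[_ h] _] := HW hsY; first by rewrite hsz.
    exact: h.
  apply: submx_trans (cc_mono _ (tens_mono (submx_refl _) hRY)) _.
  apply: submx_trans (cc_mono _ (tens_addsr _ _ _)) _.
  apply: submx_trans (cc_adds _ _ _) _.
  rewrite addsmx_sub; apply/andP; split.
    have h : (Uk i l k <= <<Uk i l k>>)%MS by rewrite genmxE.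
    by apply: submx_trans h (sub_sums _ _); rewrite mem_index_iota; lia.
  rewrite /compmx hsz.
  apply: submx_trans (tens_sums _ _ _ _) _.
  apply: sums_sub => j; rewrite mem_index_iota => /andP[hj1 hj2].
  rewrite genmxE.
  set B := castcols (Dim i (take k l)) _.
  have hB : (<<B>> <= B)%MS by rewrite genmxE.
  apply: submx_trans (cc_mono _ (tens_mono (submx_refl _) hB)) _.
  rewrite /B (eqmxP (assoc_ij _ _ _ (ltnW hj2) (ltnW hk))).
  rewrite cut_take ?(ltnW hj2) ?(ltnW hk) // take_takel ?(ltnW hj2) //.
  have hXj : (castcols (Dim (cv i l j) (drop j l))
      (tensmx (R (cv i l k) (drop k l)) (R (cv i l j) (drop j (take k l))))
      <= R (cv i l j) (drop j l))%MS.
    apply: fixmx_tens => //; first by rewrite drop_take_cat // ltnW.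
    by rewrite last_cut // ltnW.
  apply: submx_trans (cc_mono _ (tens_mono hXj (submx_refl _))) _.
  apply: submx_trans (IH j _ _ _) (RW_mono _ _ _) => //; lia.
rewrite /compmx; apply: sums_sub => k; rewrite mem_index_iota => /andP[hk1 hk2].
rewrite genmxE; apply: submx_trans (key k hk1 hk2) (RW_mono _ _ _); lia.
Qed.

End Main.


Lemma comps_auxS f n : comps_aux f.+1 n.+1 =
  flatten [seq [seq k :: c | c <- comps_aux f (n.+1 - k)] | k <- iota 1 n.+1].
Proof. by []. Qed.

Lemma comps_fuel n f : (n <= f)%N -> comps_aux f n = comps n.
Proof.
rewrite /comps; elim/ltn_ind: n f => -[|n] IH [|f] // hf.
rewrite !comps_auxS.
congr flatten; apply/eq_in_map => k; rewrite mem_iota => /andP[hk1 hk2].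
have h1 : (n.+1 - k < n.+1)%N by lia.
rewrite (IH _ h1 f); last by lia.
by rewrite (IH _ h1 n) //; lia.
Qed.

Lemma compsS n : comps n.+1 =
  flatten [seq [seq k :: c | c <- comps (n.+1 - k)] | k <- iota 1 n.+1].
Proof.
rewrite {1}/comps comps_auxS; congr flatten; apply/eq_in_map => k.
rewrite mem_iota => /andP[hk1 hk2]; rewrite comps_fuel //; lia.
Qed.

Section Stack.
Variable F : fieldType.
Variable Q0 : Type.
Variable na : Q0 -> Q0 -> nat.
Variable W : forall (i : Q0) (l : seq Q0), 'M[F]_(Dim na i l).
Local Notation Dim := (Dim na).
Local Notation cv := cut_vertex.

Lemma colE m1 m2 n (A : 'M[F]_(m1, n)) (B : 'M[F]_(m2, n)) : (col_mx A B == A + B)%MS.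
Proof. by apply/eqmxP; apply: eqmx_sym; apply: addsmxE. Qed.

Lemma rs_cat ps1 ps2 i l : rs W (ps1 ++ ps2) i l = (rs W ps1 i l + rs W ps2 i l)%N.
Proof. by elim: ps1 => [|p ps1 IH] //=; rewrite IH addnA. Qed.

Lemma stack_cat ps1 ps2 i l :
  (stackmx W (ps1 ++ ps2) i l == stackmx W ps1 i l + stackmx W ps2 i l)%MS.
Proof.
elim: ps1 => [|p ps1 IH] /=.
  by apply/eqmxP; apply: eqmx_sym; apply: adds0mx.
set b := blocksmx W p i l.
set S12 := stackmx W (ps1 ++ ps2) i l; set S1 := stackmx W ps1 i l; set S2 := stackmx W ps2 i l.
move/andP: IH => [h1 h2].
have hb : (b <= col_mx b S1)%MS by rewrite (eqmxP (colE _ _)) addsmxSl.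
have hS1 : (S1 <= col_mx b S1)%MS by rewrite (eqmxP (colE _ _)) addsmxSr.
have hb' : (b <= col_mx b S12)%MS by rewrite (eqmxP (colE _ _)) addsmxSl.
have hS12 : (S12 <= col_mx b S12)%MS by rewrite (eqmxP (colE _ _)) addsmxSr.
apply/andP; split.
  rewrite col_mx_sub; apply/andP; split.
    exact: submx_trans hb (addsmxSl _ _).
  by apply: submx_trans h1 _; apply: addsmxS.
rewrite addsmx_sub col_mx_sub hb' /=; apply/andP; split.
  apply: submx_trans _ hS12; apply: submx_trans _ h2; exact: addsmxSl.
apply: submx_trans _ hS12; apply: submx_trans _ h2; exact: addsmxSr.
Qed.

Lemma rs_flat (L : seq nat) (f : nat -> seq (seq nat)) i l :
  rs W (flatten [seq f k | k <- L]) i l = (\sum_(k <- L) rs W (f k) i l)%N.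
Proof. by elim: L => [|x L IH]; rewrite ?big_nil ?big_cons //= rs_cat IH. Qed.

Lemma stack_flat (L : seq nat) (f : nat -> seq (seq nat)) i l :
  (stackmx W (flatten [seq f k | k <- L]) i l == \sum_(k <- L) <<stackmx W (f k) i l>>)%MS.
Proof.
elim: L => [|x L IH]; first by rewrite big_nil /=; apply/andP; split; apply: sub0mx.
rewrite big_cons /=; move/andP: IH => [h1 h2].
have := stack_cat (f x) (flatten [seq f k | k <- L]) i l => /andP[h3 h4].
apply/andP; split.
  apply: submx_trans h3 _; apply: addsmxS => //; by rewrite genmxE.
apply: submx_trans _ h4; apply: addsmxS => //; by rewrite genmxE.
Qed.

Lemma rs_map k cs i l :
  rs W [seq k :: c | c <- cs] i l = (rs W cs (cv i l k) (drop k l) * \rank (W i (take k l)))%N.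
Proof. by elim: cs => [|c cs IH] //=; rewrite IH mulnDl. Qed.

Lemma stack_map k cs i l :
  (stackmx W [seq k :: c | c <- cs] i l ==
   castcols (Dim i l) (tensmx (stackmx W cs (cv i l k) (drop k l)) (row_base (W i (take k l)))))%MS.
Proof.
elim: cs => [|c cs IH] /=.
  by rewrite tens0mx cc0; apply/andP; split; apply: sub0mx.
move/andP: IH => [h1 h2].
set b := blocksmx W c _ _; set S := stackmx W cs _ _.
have hb : (b <= col_mx b S)%MS by rewrite (eqmxP (colE _ _)) addsmxSl.
have hS : (S <= col_mx b S)%MS by rewrite (eqmxP (colE _ _)) addsmxSr.
apply/andP; split.
  rewrite col_mx_sub; apply/andP; split.
    by apply: cc_mono; apply: tens_mono.
  by apply: submx_trans h1 _; apply: cc_mono; apply: tens_mono.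
have hc : (col_mx b S <= b + S)%MS by rewrite -(eqmxP (colE _ _)).
apply: submx_trans (cc_mono _ (tens_mono hc (submx_refl _))) _.
apply: submx_trans (cc_mono _ (tens_addsl _ _ _)) _.
apply: submx_trans (cc_adds _ _ _) _.
rewrite (eqmxP (colE _ _)); apply: addsmxS => //.
Qed.

End Stack.

Section Final.
Variable F : fieldType.
Variable Q0 : Type.
Variable na : Q0 -> Q0 -> nat.
Variable G : arrow_family F na -> Prop.
Variable W : forall (i : Q0) (l : seq Q0), 'M[F]_(Dim na i l).
Variables (i0 : Q0) (l0 : seq Q0).
Hypothesis HW : forall i l, subpath i l i0 l0 -> (0 < size l)%N -> irr_space G W i l.

Local Notation Dim := (Dim na).
Local Notation cv := cut_vertex.
Local Notation R := (fixmx G).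
Local Notation sub i l := (subpath i l i0 l0).

Lemma Qall n i l : (size l <= n)%N -> sub i l -> Qprop G W i l.
Proof.
elim: n i l => [|n IH] i l hn hs; apply: (Q_step HW hs) => b hb1 hb2.
  exfalso; lia.
apply: IH; last by apply: subpath_Y => //; lia.
by rewrite size_takel; lia.
Qed.

Definition Sp i l := stackmx W (comps (size l)) i l.

Lemma Sp_nil i : row_free (Sp i [::]) /\ (Sp i [::] == R i [::])%MS.
Proof.
rewrite /Sp /= castcols_id.
have hr : \rank (col_mx (1%:M : 'M[F]_1) (0 : 'M[F]_(0, 1))) = 1%N.
  by rewrite (eqmx_rank (colE _ _)) addsmx0 mxrank1.
split; first by rewrite /row_free hr.
apply/andP; split; apply: submx_full; first exact: fixmx_nil.
by rewrite /row_full hr.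
Qed.

Lemma RW_full i l : sub i l -> (0 < size l)%N ->
  (RW G W i l (size l).+1 == R i l)%MS.
Proof.
move=> hs hl.
have [/andP[hWC1 hWC2] _] := HW hs hl.
rewrite /RW big_nat_recr //= -/(RW G W i l (size l)).
have hU := Un_W G W i l; move/andP: hU => [hU1 hU2].
have hC := span_comp HW hs; have hC' := RW_comp HW hs (leqnn (size l)).
apply/andP; split.
  rewrite addsmx_sub; apply/andP; split.
    by apply: submx_trans hC' _; apply: submx_trans _ hWC1; apply: addsmxSr.
  by apply: submx_trans hU1 _; apply: submx_trans _ hWC1; apply: addsmxSl.
apply: submx_trans hWC2 _; rewrite addsmx_sub; apply/andP; split.
  exact: submx_trans hU2 (addsmxSr _ _).
exact: submx_trans hC (addsmxSl _ _).
Qed.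

Lemma Sp_main n i l : size l = n -> sub i l ->
  row_free (Sp i l) /\ (Sp i l == R i l)%MS.
Proof.
elim/ltn_ind: n i l => -[|m] IH i l hn hs.
  by case: l hn hs => // _ _; apply: Sp_nil.
have hl : (0 < size l)%N by rewrite hn.
have IHk : forall k, (0 < k)%N -> (k <= size l)%N ->
    row_free (Sp (cv i l k) (drop k l)) /\
    (Sp (cv i l k) (drop k l) == R (cv i l k) (drop k l))%MS.
  move=> k hk1 hk2; apply: (IH (size (drop k l))); last 2 first.
  - by [].
  - exact: subpath_X.
  by rewrite size_drop; lia.
pose f k := [seq k :: c | c <- comps (size l - k)].
have hcomp : comps (size l) = flatten [seq f k | k <- iota 1 (size l)].
  by rewrite /f hn compsS.
have hblk : forall k, (0 < k)%N -> (k <= size l)%N ->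
    (stackmx W (f k) i l == <<Uk G W i l k>>)%MS /\
    \rank (Uk G W i l k) = rs W (f k) i l.
  move=> k hk1 hk2; have [hf he] := IHk k hk1 hk2.
  move: hf he; rewrite /Sp size_drop => hf he.
  have h1 := stack_map W k (comps (size l - k)) i l.
  set T := castcols _ (tensmx (stackmx W (comps (size l - k)) _ _) _) in h1.
  have hT : (T == Uk G W i l k)%MS.
    move/andP: he => [he1 he2].
    apply/andP; split; apply: cc_mono; apply: tens_mono => //;
      by rewrite eq_row_base.
  split.
    apply/eqmxP; apply: eqmx_trans (eqmxP h1) _.
    apply: eqmx_trans (eqmxP hT) _; apply: eqmx_sym; exact: genmxE.
  rewrite -(eqmx_rank hT) rs_map.
  have : row_free T.
    rewrite cc_free; last by apply: dim_k.
    by apply: tens_free => //; apply: row_base_free.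
  by rewrite /row_free => /eqP ->.
have hiota : iota 1 (size l) = index_iota 1 (size l).+1 by rewrite /index_iota subn1.
have hSp : (Sp i l == RW G W i l (size l).+1)%MS.
  rewrite /Sp hcomp /RW -hiota.
  apply/eqmxP; apply: eqmx_trans (eqmxP (stack_flat W _ f i l)) _.
  apply/eqmxP; apply/andP; split; apply: sums_sub => k hk;
    move: (hk); rewrite mem_iota => /andP[hk1 hk2];
    have [/andP[h1 h2] _] := hblk k hk1 (ltnSE hk2); rewrite genmxE.
    by apply: submx_trans h1 _; apply: sub_sums.
  have hu : (Uk G W i l k <= <<Uk G W i l k>>)%MS by rewrite genmxE.
  apply: submx_trans hu _; apply: submx_trans h2 _.
  have h3 : (stackmx W (f k) i l <= <<stackmx W (f k) i l>>)%MS by rewrite genmxE.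
  exact: submx_trans h3 (sub_sums _ hk).
have hR := RW_full hs hl.
split; last first.
  by apply/eqmxP; apply: eqmx_trans (eqmxP hSp) (eqmxP hR).
rewrite /row_free (eqmx_rank hSp).
rewrite (rank_RW HW hs) //; last first.
  move=> b hb1 hb2; apply: (Qall (n := size (take b l))) => //.
  by apply: subpath_Y => //; lia.
rewrite /Sp hcomp rs_flat -hiota.
apply/eqP; apply: eq_big_seq => k; rewrite mem_iota => /andP[hk1 hk2].
by have [_ ->] := hblk k hk1 (ltnSE hk2).
Qed.

End Final.

Theorem mainTheorem3 (F : fieldType) (Q0 : Type) (na : Q0 -> Q0 -> nat)
  (G : arrow_family F na -> Prop) (HG : is_group G)
  (i0 : Q0) (l0 : seq Q0) (Hpath : is_arrow_path na i0 l0) (Hm : (0 < size l0)%N)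
  (W : forall (i : Q0) (l : seq Q0), 'M[F]_(Dim na i l))
  (HW : forall (i : Q0) (l : seq Q0),
          subpath i l i0 l0 -> (0 < size l)%N -> irr_space G W i l) :
  psi_bijective G W i0 l0.
Proof.
have hs : subpath i0 l0 i0 l0.
  exists 0%N; split; first by rewrite add0n.
  by rewrite drop0 -[(size l0).+1]/(size (i0 :: l0)) take_size.
have [hfree /andP[h1 h2]] := Sp_main HW (erefl (size l0)) hs.
split.
  move=> x; rewrite /psi; apply: submx_trans (submxMl _ _) _; exact: h1.
move=> y hy; have /submxP[x hx] := submx_trans hy h2.
exists x; split; first by rewrite /psi hx.
move=> x' hx'; apply: (row_free_inj hfree); rewrite -hx -hx'.
by [].
Qed.
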